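(* Let $\mathcal K$ (UAVs) and $\mathcal I$ (subscribers) be finite sets. Fix $H>0$, $\sigma^2>0$, constants $\omega_{ij}>0$, transmit powers $p_j\ge0$ ($j\in\mathcal K$), subscriber positions $s_i\in\mathbb R^2$, and association indicators $c_{ik}\in\{0,1\}$ with $\sum_k c_{ik}\le 1$. Decision variables are UAV horizontal positions $q_j\in\mathbb R^2$ ($j\in\mathcal K$), reals $\eta_i$, and slack variables $b_{ij}>-H^2$ ($i\in\mathcal I$, $j\in\mathcal K$). With $h_{ij}(q)=\omega_{ij}/(H^2+\|q_j-s_i\|^2)$, consider the non-convex constraint $$\sum_{k}c_{ik}\log_2\Big(1+\frac{p_kh_{ik}(q)}{\sigma^2+\sum_{j\ne k}p_jh_{ij}(q)}\Big)\ge \eta_i. \qquad(\ast)$$ Fix a local point $q^{(r)}=(q^{(r)}_j)_{j\in\mathcal K}$ and define $d^{(r)}_{ij}=H^2+\|q^{(r)}_j-s_i\|^2$, $D^{(r)}_i=\log_2\big(\sigma^2+\sum_{j\in\mathcal K}p_j\omega_{ij}/d^{(r)}_{ij}\big)$, $E^{(r)}_{ij}=\dfrac{p_j\omega_{ij}}{(d^{(r)}_{ij})^2\,2^{D^{(r)}_i}\ln 2}$, and $\tilde\Lambda_{ik}(b)=-\log_2\big(\sigma^2+\sum_{j\ne k}\frac{p_j\omega_{ij}}{H^2+b_{ij}}\big)$. Consider the constraints $$\sum_k c_{ik}\Big(D^{(r)}_i-\sum_{j\in\mathcal K}E^{(r)}_{ij}\big(\|q_j-s_i\|^2-\|q^{(r)}_j-s_i\|^2\big)\Big)+\sum_kc_{ik}\tilde\Lambda_{ik}(b)\ge\eta_i\qquad(\ast\ast)$$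 and, for all $i\in\mathcal I$, $j\in\mathcal K$, $$-\|q^{(r)}_j-s_i\|^2+2(q^{(r)}_j-s_i)^{\mathrm T}(q_j-s_i)\ge b_{ij}.\qquad(\ast\ast\ast)$$ Then the set of $(q,\eta_i,b)$ (with $b_{ij}>-H^2$) satisfying $(\ast\ast)$ and $(\ast\ast\ast)$ is convex, and every such point satisfies $(\ast)$; i.e., $(\ast\ast)$–$(\ast\ast\ast)$ form a convex approximation of $(\ast)$ whose feasible set (projected onto $(q,\eta_i)$) is contained in that of $(\ast)$.
   Context: Setting: one time slot of a multi-UAV downlink where all UAVs fly at altitude $H$, UAV $j$ is at horizontal position $q_j$, subscriber $i$ at $s_i$ on the ground, the line-of-sight channel gain is $h_{ij}=\omega_{ij}/(H^2+\|q_j-s_i\|^2)$, and the left side of $(\ast)$ is subscriber $i$'s achievable rate under interference from the other UAVs. In the paper the slack $b_{ij}$ (written $B_{ij}(t)$) is introduced as a lower bound $b_{ij}\le\|q_j-s_i\|^2$, which $(\ast\ast\ast)$ replaces by its linearization at $q^{(r)}$. *)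

(* Defs.v *)
From HB Require Import structures.
From mathcomp Require Import all_boot all_order all_algebra.
From mathcomp Require Import all_classical all_reals.
From mathcomp Require Import exp.
Set Implicit Arguments. Unset Strict Implicit. Unset Printing Implicit Defensive.
Import Order.TTheory GRing.Theory Num.Theory.
Local Open Scope ring_scope.

Section UAV.
Variable R : realType.

Definition log2 (x : R) : R := ln x / ln 2.

Definition dot2 (u v : 'rV[R]_2) : R := \sum_(l < 2) u 0 l * v 0 l.
Definition sqn2 (u : 'rV[R]_2) : R := dot2 u u.

Variables (K I : finType) (H sigma2 : R) (omega : I -> K -> R) (p : K -> R)
  (s : I -> 'rV[R]_2) (c : I -> K -> R).

Definition gain (q : K -> 'rV[R]_2) (i : I) (j : K) : R :=
  omega i j / (H ^+ 2 + sqn2 (q j - s i)).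

Definition rate (q : K -> 'rV[R]_2) (i : I) : R :=
  \sum_(k : K) c i k *
    log2 (1 + p k * gain q i k / (sigma2 + \sum_(j : K | j != k) p j * gain q i j)).

Variable qr : K -> 'rV[R]_2.

Definition dr (i : I) (j : K) : R := H ^+ 2 + sqn2 (qr j - s i).
Definition Dr (i : I) : R := log2 (sigma2 + \sum_(j : K) p j * omega i j / dr i j).
Definition Er (i : I) (j : K) : R :=
  p j * omega i j / ((dr i j) ^+ 2 * (2 `^ (Dr i)) * ln 2).
Definition Lam (b : I -> K -> R) (i : I) (k : K) : R :=
  - log2 (sigma2 + \sum_(j : K | j != k) p j * omega i j / (H ^+ 2 + b i j)).

Definition cstr2 (i : I) (q : K -> 'rV[R]_2) (eta : R) (b : I -> K -> R) : Prop :=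
  \sum_(k : K) c i k *
     (Dr i - \sum_(j : K) Er i j * (sqn2 (q j - s i) - sqn2 (qr j - s i)))
  + \sum_(k : K) c i k * Lam b i k >= eta.

Definition cstr3 (q : K -> 'rV[R]_2) (b : I -> K -> R) : Prop :=
  forall (i' : I) (j : K),
    - sqn2 (qr j - s i') + 2 * dot2 (qr j - s i') (q j - s i') >= b i' j.

Definition approx_feasible (i : I) (q : K -> 'rV[R]_2) (eta : R) (b : I -> K -> R)
  : Prop :=
  (forall (i' : I) (j : K), b i' j > - H ^+ 2) /\ cstr2 i q eta b /\ cstr3 q b.

End UAV.

(* Main.v *)
Require Import Defs.
From HB Require Import structures.
From mathcomp Require Import all_boot all_order all_algebra.
From mathcomp Require Import all_classical all_reals.
From mathcomp Require Import exp sequences ring lra.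
Import Order.TTheory GRing.Theory Num.Theory.
Local Open Scope ring_scope.
Local Open Scope ring_scope.
Lemma ln_le_sub1 {R : realType} {y : R} : 0 < y -> ln y <= y - 1.
Proof.
move=> y0; have := @le_ln1Dx R (y - 1); rewrite [1 + _]addrC subrK; apply; lra.
Qed.

Lemma key_tangent {R : realType} {y z : R} : 0 < y -> 0 < z ->
  1 - y^-1 <= ln z + y / z - 1.
Proof.
move=> y0 z0.
have yi : 0 < y^-1 by rewrite invr_gt0.
have h1 := ln_le_sub1 yi.
rewrite lnV ?posrE // in h1.
have yz : 0 < y / z by apply: divr_gt0.
have h2 := ln_le_sub1 yz.
rewrite ln_div ?posrE // in h2.
lra.
Qed.

Lemma ln_conc {R : realType} (x y t : R) : 0 < x -> 0 < y -> 0 <= t <= 1 ->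
  t * ln x + (1 - t) * ln y <= ln (t * x + (1 - t) * y).
Proof.
move=> x0 y0 /andP[t0 t1].
set m := t * x + (1 - t) * y.
have m0 : 0 < m by rewrite /m; nra.
have h1 := ln_le_sub1 (divr_gt0 x0 m0); rewrite ln_div ?posrE // in h1.
have h2 := ln_le_sub1 (divr_gt0 y0 m0); rewrite ln_div ?posrE // in h2.
have e : t * (x / m) + (1 - t) * (y / m) = 1.
  by rewrite /m; field; rewrite gt_eqF.
have ha : t * (ln x - ln m) <= t * (x / m - 1) by apply: ler_wpM2l.
have hb : (1 - t) * (ln y - ln m) <= (1 - t) * (y / m - 1) by apply: ler_wpM2l; lra.
lra.
Qed.

Lemma L1 {R : realType} (u v G G' t : R) : 0 < u -> 0 < v -> 0 < G -> 0 < G' ->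
  0 <= t <= 1 ->
  (t * u + (1 - t) * v)^-1 <=
  expR (t * ln G + (1 - t) * ln G') * (t / (u * G) + (1 - t) / (v * G')).
Proof.
move=> u0 v0 G0 G'0 /andP[t0 t1].
have tt : 0 <= t <= 1 by apply/andP.
have m0 : 0 < t * u + (1 - t) * v by nra.
have s1 : (t * u + (1 - t) * v)^-1 <= expR (- (t * ln u + (1 - t) * ln v)).
  rewrite -[X in X <= _]lnK ?posrE ?invr_gt0 // ler_expR lnV ?posrE //.
  by rewrite lerN2; apply: ln_conc.
have X0 : 0 < (u * G)^-1 by rewrite invr_gt0 mulr_gt0.
have Y0 : 0 < (v * G')^-1 by rewrite invr_gt0 mulr_gt0.
have s2 : expR (t * ln ((u * G)^-1) + (1 - t) * ln ((v * G')^-1))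
    <= t / (u * G) + (1 - t) / (v * G').
  have p0 : 0 < t / (u * G) + (1 - t) / (v * G').
    have [tp|tn] := ltrP 0 t.
      have := mulr_gt0 tp X0; have : 0 <= 1 - t by lra.
      move=> h; have := mulr_ge0 h (ltW Y0); lra.
    have h : 0 < 1 - t by lra.
    have := mulr_gt0 h Y0; have := mulr_ge0 t0 (ltW X0); lra.
  rewrite -[X in _ <= X]lnK ?posrE // ler_expR.
  by apply: ln_conc.
rewrite lnV ?posrE ?mulr_gt0 // lnM ?posrE // in s2.
rewrite lnV ?posrE ?mulr_gt0 // lnM ?posrE // in s2.
apply: (le_trans s1).
have e : expR (- (t * ln u + (1 - t) * ln v)) =
   expR (t * ln G + (1 - t) * ln G') *
   expR (t * - (ln u + ln G) + (1 - t) * - (ln v + ln G')).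
  by rewrite -expRD; congr expR; ring.
rewrite e; apply: ler_wpM2l => //; exact: expR_ge0.
Qed.

Lemma conc_log {R : realType} {J : finType} (P : pred J) {sig : R} (a u v : J -> R) {t : R} :
  0 < sig -> (forall j, 0 <= a j) -> (forall j, 0 < u j) -> (forall j, 0 < v j) ->
  0 <= t <= 1 ->
  ln (sig + \sum_(j | P j) a j / (t * u j + (1 - t) * v j)) <=
  t * ln (sig + \sum_(j | P j) a j / u j) + (1 - t) * ln (sig + \sum_(j | P j) a j / v j).
Proof.
move=> s0 a0 u0 v0 tt.
set S1 := \sum_(j | P j) a j / u j.
set S2 := \sum_(j | P j) a j / v j.
have S10 : 0 <= S1 by apply: sumr_ge0 => j _; apply: divr_ge0 => //; exact: ltW.
have S20 : 0 <= S2 by apply: sumr_ge0 => j _; apply: divr_ge0 => //; exact: ltW.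
have G0 : 0 < sig + S1 by lra.
have G'0 : 0 < sig + S2 by lra.
set G := sig + S1. set G' := sig + S2.
set al := expR (t * ln G + (1 - t) * ln G').
have al0 : 0 < al by apply: expR_gt0.
have hs : sig <= sig * (al * (t / (1 * G) + (1 - t) / (1 * G'))).
  have := @L1 R 1 1 G G' t ltr01 ltr01 G0 G'0 tt.
  rewrite !mulr1 [t + _]addrC subrK invr1 => h.
  rewrite -{1}[sig]mulr1; apply: ler_wpM2l => //; exact: ltW.
have hsum : \sum_(j | P j) a j / (t * u j + (1 - t) * v j) <=
            \sum_(j | P j) a j * (al * (t / (u j * G) + (1 - t) / (v j * G'))).
  apply: ler_sum => j _; apply: ler_wpM2l => //; exact: L1.
have esum : \sum_(j | P j) a j * (al * (t / (u j * G) + (1 - t) / (v j * G'))) =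
            al * t / G * S1 + al * (1 - t) / G' * S2.
  rewrite /S1 /S2 !mulr_sumr -big_split; apply: eq_bigr => j _.
  by rewrite /=; field; rewrite !gt_eqF.
have gle : sig + \sum_(j | P j) a j / (t * u j + (1 - t) * v j) <= al.
  have -> : al = sig * (al * (t / (1 * G) + (1 - t) / (1 * G'))) +
                 (al * t / G * S1 + al * (1 - t) / G' * S2).
    by rewrite /G /G'; field; rewrite !gt_eqF.
  by rewrite -esum; apply: lerD.
have g0 : 0 < sig + \sum_(j | P j) a j / (t * u j + (1 - t) * v j).
  apply: (lt_le_trans s0); rewrite lerDl; apply: sumr_ge0 => j _.
  apply: divr_ge0 => //; case/andP: tt => t0 t1.
  have := u0 j; have := v0 j; nra.
rewrite -[X in _ <= X](expRK (t * ln G + (1 - t) * ln G')).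
by rewrite ler_ln ?posrE.
Qed.

Lemma tangent {R : realType} {J : finType} (sig : R) (a d d0 : J -> R) :
  0 < sig -> (forall j, 0 <= a j) -> (forall j, 0 < d j) -> (forall j, 0 < d0 j) ->
  ln (sig + \sum_j a j / d0 j) +
    (\sum_j a j / d0 j * (1 - d j / d0 j)) / (sig + \sum_j a j / d0 j)
  <= ln (sig + \sum_j a j / d j).
Proof.
move=> s0 a0 d0p d00.
set S := \sum_j a j / d j. set S0 := \sum_j a j / d0 j.
have S_ge0 : 0 <= S by apply: sumr_ge0 => j _; apply: divr_ge0 => //; exact: ltW.
have S0_ge0 : 0 <= S0 by apply: sumr_ge0 => j _; apply: divr_ge0 => //; exact: ltW.
set A := sig + S. set A0 := sig + S0.
have A_gt0 : 0 < A by rewrite /A; lra.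
have A0_gt0 : 0 < A0 by rewrite /A0; lra.
set z := A / A0.
have z0 : 0 < z by apply: divr_gt0.
set L := ln z.
have hT : \sum_j a j / d0 j * (1 - d j / d0 j) <= (L - 1) * S0 + z^-1 * S.
  rewrite /S0 /S mulr_sumr mulr_sumr -big_split /=.
  apply: ler_sum => j _.
  have y0 : 0 < d0 j / d j by apply: divr_gt0.
  have := key_tangent y0 z0; rewrite invf_div => h.
  have -> : (L - 1) * (a j / d0 j) + z^-1 * (a j / d j) =
            a j / d0 j * (L + d0 j / d j / z - 1).
    by rewrite /L; field; rewrite !gt_eqF.
  apply: ler_wpM2l => //; apply: divr_ge0 => //; exact: ltW.
have hs := key_tangent ltr01 z0; rewrite invr1 mul1r in hs.
have e : A0 * L - ((L - 1) * S0 + z^-1 * S) = sig * (L + z^-1 - 1).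
  by rewrite /z /A /A0 invf_div; field; rewrite !gt_eqF.
have hsig : 0 <= sig * (L + z^-1 - 1) by apply: mulr_ge0; rewrite ?/L; lra.
have hln : L = ln A - ln A0 by rewrite /L /z ln_div ?posrE.
have hT' : \sum_j a j / d0 j * (1 - d j / d0 j) <= A0 * L by lra.
have : (\sum_j a j / d0 j * (1 - d j / d0 j)) / A0 <= L.
  by rewrite ler_pdivrMr // mulrC.
lra.
Qed.

Lemma sum2 {R : realType} (F : 'I_2 -> R) : \sum_(l < 2) F l = F 0 + F 1.
Proof. by rewrite !big_ord_recr big_ord0 /= add0r; congr (F _ + F _); apply/val_inj. Qed.

Lemma dot2E {R : realType} (u v : 'rV[R]_2) : dot2 u v = u 0 0 * v 0 0 + u 0 1 * v 0 1.
Proof. by rewrite /dot2 sum2. Qed.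

Lemma sqn2_conv {R : realType} (x y : 'rV[R]_2) t : 0 <= t <= 1 ->
  sqn2 (t *: x + (1 - t) *: y) <= t * sqn2 x + (1 - t) * sqn2 y.
Proof.
move=> /andP[t0 t1]; rewrite /sqn2 !dot2E !mxE.
have tt : 0 <= t * (1 - t) by apply: mulr_ge0; lra.
have h0 := mulr_ge0 tt (sqr_ge0 (x 0 0 - y 0 0)).
have h1 := mulr_ge0 tt (sqr_ge0 (x 0 1 - y 0 1)).
rewrite !expr2 in h0 h1.
nra.
Qed.

Lemma combo_sub {R : realType} (q1 q2 s : 'rV[R]_2) t :
  t *: q1 + (1 - t) *: q2 - s = t *: (q1 - s) + (1 - t) *: (q2 - s).
Proof. by apply/matrixP => a b; rewrite !mxE; ring. Qed.

Lemma sqn2_ge_lin {R : realType} (w x : 'rV[R]_2) : - sqn2 w + 2 * dot2 w x <= sqn2 x.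
Proof.
rewrite /sqn2 !dot2E.
have h0 := sqr_ge0 (x 0 0 - w 0 0).
have h1 := sqr_ge0 (x 0 1 - w 0 1).
rewrite !expr2 in h0 h1.
nra.
Qed.

Lemma conv_gt {R : realType} (m x y t : R) : m < x -> m < y -> 0 <= t <= 1 ->
  m < t * x + (1 - t) * y.
Proof.
move=> hx hy /andP[t0 t1].
have ax : 0 < x - m by rewrite subr_gt0.
have ay : 0 < y - m by rewrite subr_gt0.
have [tp|tn] := ltrP 0 t.
  have h := mulr_gt0 tp ax.
  have h1 : 0 <= 1 - t by lra.
  have h2 := mulr_ge0 h1 (ltW ay).
  nra.
have h : 0 < 1 - t by lra.
have h2 := mulr_gt0 h ay.
have h3 := mulr_ge0 t0 (ltW ax).
nra.
Qed.

Lemma sum_conc {R : realType} {J : finType} (F1 F2 Ft : J -> R) t :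
  (forall k, t * F1 k + (1 - t) * F2 k <= Ft k) ->
  t * \sum_k F1 k + (1 - t) * \sum_k F2 k <= \sum_k Ft k.
Proof. by move=> h; rewrite !mulr_sumr -big_split; apply: ler_sum => k _; exact: h. Qed.

Lemma sum_conv {R : realType} {J : finType} (F1 F2 Ft : J -> R) t :
  (forall k, Ft k <= t * F1 k + (1 - t) * F2 k) ->
  \sum_k Ft k <= t * \sum_k F1 k + (1 - t) * \sum_k F2 k.
Proof. by move=> h; rewrite !mulr_sumr -big_split; apply: ler_sum => k _; exact: h. Qed.

Lemma dot2_lin {R : realType} (w x y : 'rV[R]_2) t :
  dot2 w (t *: x + (1 - t) *: y) = t * dot2 w x + (1 - t) * dot2 w y.
Proof. by rewrite !dot2E !mxE; ring. Qed.

Lemma sqn2_ge0 {R : realType} (u : 'rV[R]_2) : 0 <= sqn2 u.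
Proof. by rewrite /sqn2 dot2E; apply: addr_ge0; rewrite -expr2 sqr_ge0. Qed.

Theorem proposition2 (R : realType) (K I : finType) (H sigma2 : R)
  (omega : I -> K -> R) (p : K -> R) (s : I -> 'rV[R]_2) (c : I -> K -> R)
  (qr : K -> 'rV[R]_2) :
  0 < H -> 0 < sigma2 ->
  (forall i j, 0 < omega i j) ->
  (forall j, 0 <= p j) ->
  (forall i k, c i k = 0 \/ c i k = 1) ->
  (forall i, \sum_(k : K) c i k <= 1) ->
  forall i : I,
    (forall (q1 q2 : K -> 'rV[R]_2) (eta1 eta2 : R) (b1 b2 : I -> K -> R) (t : R),
       0 <= t <= 1 ->
       approx_feasible H sigma2 omega p s c qr i q1 eta1 b1 ->
       approx_feasible H sigma2 omega p s c qr i q2 eta2 b2 ->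
       approx_feasible H sigma2 omega p s c qr i
         (fun j => t *: q1 j + (1 - t) *: q2 j)
         (t * eta1 + (1 - t) * eta2)
         (fun i' j => t * b1 i' j + (1 - t) * b2 i' j))
    /\
    (forall (q : K -> 'rV[R]_2) (eta : R) (b : I -> K -> R),
       approx_feasible H sigma2 omega p s c qr i q eta b ->
       rate H sigma2 omega p s c q i >= eta).
Proof.
move=> H0 s0 om0 p0 c01 csum i.
have c0 : forall i k, 0 <= c i k by move=> i' k; case: (c01 i' k) => ->; lra.
have ln2 : 0 < ln (2:R) by apply: ln_gt0; rewrite ltr1n.
have a0 : forall i j, 0 <= p j * omega i j.
  by move=> i' j; apply: mulr_ge0 => //; exact: ltW.
have H2 : 0 < H ^+ 2 by apply: exprn_gt0.
have dpos : forall (u : 'rV[R]_2), 0 < H ^+ 2 + sqn2 u.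
  by move=> u; have := sqn2_ge0 u; lra.
have E0 : forall j, 0 <= Er H sigma2 omega p s qr i j.
  move=> j; rewrite /Er; apply: divr_ge0 => //.
  apply: mulr_ge0; [apply: mulr_ge0; [by rewrite sqr_ge0 | exact: powR_ge0] | exact: ltW].
split.
  move=> q1 q2 e1 e2 b1 b2 t tt [hb1 [c21 c31]] [hb2 [c22 c32]].
  case/andP: (tt) => t0 t1.
  have t1' : 0 <= 1 - t by lra.
  split; [|split].
  - by move=> i' j /=; apply: conv_gt.
  - move: c21 c22; rewrite /cstr2 /= => c21 c22.
    apply: (le_trans (lerD (ler_wpM2l t0 c21) (ler_wpM2l t1' c22))).
    rewrite !mulrDr addrACA; apply: lerD.
    + apply: sum_conc => k.
      rewrite mulrCA [(1 - t) * (c i k * _)]mulrCA -mulrDr; apply: ler_wpM2l => //.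
      suff hs : \sum_j Er H sigma2 omega p s qr i j *
                  (sqn2 (t *: q1 j + (1 - t) *: q2 j - s i) - sqn2 (qr j - s i))
             <= t * \sum_j Er H sigma2 omega p s qr i j *
                  (sqn2 (q1 j - s i) - sqn2 (qr j - s i))
              + (1 - t) * \sum_j Er H sigma2 omega p s qr i j *
                  (sqn2 (q2 j - s i) - sqn2 (qr j - s i)) by lra.
      apply: sum_conv => j.
      have hx := sqn2_conv (q1 j - s i) (q2 j - s i) t tt; rewrite -combo_sub in hx.
      have := ler_wpM2l (E0 j) hx.
      lra.
    + apply: sum_conc => k.
      rewrite mulrCA [(1 - t) * (c i k * _)]mulrCA -mulrDr; apply: ler_wpM2l => //.
      rewrite /Lam /log2 /=.
      have u0 : forall j, 0 < H ^+ 2 + b1 i j by move=> j; have := hb1 i j; lra.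
      have v0 : forall j, 0 < H ^+ 2 + b2 i j by move=> j; have := hb2 i j; lra.
      have hl := conc_log (fun j => j != k) (fun j => p j * omega i j) (fun j => H ^+ 2 + b1 i j) (fun j => H ^+ 2 + b2 i j) s0 (a0 i) u0 v0 tt.
      have eqs : \sum_(j | j != k) p j * omega i j / (H ^+ 2 + (t * b1 i j + (1 - t) * b2 i j))
        = \sum_(j | j != k) p j * omega i j / (t * (H ^+ 2 + b1 i j) + (1 - t) * (H ^+ 2 + b2 i j)).
        by apply: eq_bigr => j _; congr (_ / _); ring.
      rewrite eqs.
      have li : 0 <= (ln (2:R))^-1 by rewrite invr_ge0; exact: ltW.
      have := ler_wpM2r li hl.
      lra.
  - move=> i' j /=; rewrite combo_sub dot2_lin.
    have h1 := c31 i' j; have h2 := c32 i' j.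
    have k1 := ler_wpM2l t0 h1; have k2 := ler_wpM2l t1' h2.
    lra.
move=> q e b [hb [c2 c3]].
move: c2; rewrite /cstr2 /rate => c2.
apply: (le_trans c2); rewrite -big_split /=; apply: ler_sum => k _.
rewrite -mulrDr; apply: ler_wpM2l => //.
rewrite /gain.
set d := fun j => H ^+ 2 + sqn2 (q j - s i).
set a := fun j => p j * omega i j.
have eA : forall P : pred K, \sum_(j | P j) p j * (omega i j / (H ^+ 2 + sqn2 (q j - s i)))
   = \sum_(j | P j) a j / d j.
  by move=> P; apply: eq_bigr => j _; rewrite mulrA.
rewrite (eA (fun j => j != k)) mulrA.
set Sk := \sum_(j | j != k) a j / d j.
have Sk0 : 0 <= Sk.
  by apply: sumr_ge0 => j _; apply: divr_ge0; [exact: a0 | exact: ltW (dpos _)].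
have ak0 : 0 <= a k / d k by apply: divr_ge0; [exact: a0 | exact: ltW (dpos _)].
set A := sigma2 + \sum_j a j / d j.
have eAk : A = (sigma2 + Sk) + a k / d k.
  by rewrite /A (bigD1 k) //= /Sk; ring.
have hlog : log2 (1 + a k / d k / (sigma2 + Sk)) = log2 A - log2 (sigma2 + Sk).
  rewrite /log2 -mulrBl -ln_div ?posrE; [|lra|lra].
  have dk : 0 < d k := dpos _.
  have sk : 0 < sigma2 + Sk by lra.
  by congr (ln _ / _); rewrite eAk; field; rewrite !gt_eqF.
rewrite hlog.
have hLam : Lam H sigma2 omega p b i k <= - log2 (sigma2 + Sk).
  rewrite /Lam /log2 lerN2; apply: ler_wpM2r; first by rewrite invr_ge0; exact: ltW.
  rewrite ler_ln ?posrE; last 2 first.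
  - lra.
  - apply: (lt_le_trans s0); rewrite lerDl; apply: sumr_ge0 => j _.
    apply: divr_ge0; first exact: a0.
    have := hb i j; lra.
  rewrite lerD2l; apply: ler_sum => j _.
  rewrite /a; apply: ler_wpM2l; first exact: a0.
  have bl : b i j <= sqn2 (q j - s i).
    have := c3 i j; have := sqn2_ge_lin (qr j - s i) (q j - s i); lra.
  have hbp : 0 < H ^+ 2 + b i j by have := hb i j; lra.
  rewrite lef_pV2 ?posrE //; first by rewrite /d lerD2l.
  exact: dpos.
set d0 := fun j => dr H s qr i j.
have d00 : forall j, 0 < d0 j by move=> j; rewrite /d0 /dr; exact: dpos.
have dp : forall j, 0 < d j by move=> j; exact: dpos.
have ht := @tangent R K sigma2 a d d0 s0 (a0 i) dp d00.
set A0 := sigma2 + \sum_j a j / d0 j.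
have A0p : 0 < A0.
  rewrite /A0; apply: (lt_le_trans s0); rewrite lerDl; apply: sumr_ge0 => j _.
  by apply: divr_ge0; [exact: a0 | exact: ltW].
have eDr : Dr H sigma2 omega p s qr i = ln A0 / ln 2 by [].
have p2 : 2 `^ (Dr H sigma2 omega p s qr i) = A0.
  have hp : 0 < 2 `^ (Dr H sigma2 omega p s qr i) by apply: powR_gt0.
  rewrite -[LHS]lnK ?posrE // ln_powR eDr divfK ?gt_eqF // lnK ?posrE //.
set T := \sum_j a j / d0 j * (1 - d j / d0 j).
have eE : \sum_j Er H sigma2 omega p s qr i j * (sqn2 (q j - s i) - sqn2 (qr j - s i))
    = - T / (A0 * ln 2).
  rewrite /T -sumrN mulr_suml; apply: eq_bigr => j _.
  rewrite /Er p2 /d /d0 /dr /a; field.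
  by rewrite !gt_eqF //; apply: dpos.
rewrite eE.
have : Dr H sigma2 omega p s qr i - - T / (A0 * ln 2) <= log2 A.
  rewrite eDr /log2.
  have -> : ln A0 / ln 2 - - T / (A0 * ln 2) = (ln A0 + T / A0) / ln 2.
    by field; rewrite !gt_eqF.
  apply: ler_wpM2r; first by rewrite invr_ge0; exact: ltW.
  exact: ht.
lra.
Qed.
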